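(* Let $G$ be a finite group and $\mathcal{A}$ a finite subgroup of $\mathbb{C}^\times$. Let $M$ be a square matrix with entries in $\mathcal{A}$ whose rows and columns are labelled by the elements of $G$ in a fixed ordering. Then $M$ is cocyclic over $G$ if and only if there exist a normalised 2-cocycle $\psi\colon G\times G\to\mathcal{A}$ and a matrix $\mathcal{A}$-equivalent to $M$ lying in the centraliser algebra $\mathrm{C}(R)=\{X : XR(\gamma)=R(\gamma)X\ \forall\gamma\in\Gamma\}$, where $\Gamma=(G,\mathcal{A},\psi)$ and $R$ is the monomial representation $R(a,g)=a\left[\psi(x,g)\delta^{xg}_{y}\right]_{x,y\in G}$ of $\Gamma$.
   Context: A normalised 2-cocycle is a function $\psi\colon G\times G\to\mathcal{A}$ with $\psi(g,1)=\psi(1,g)=1$ and $\psi(g,h)\psi(gh,k)=\psi(g,hk)\psi(h,k)$ for all $g,h,k$. The extension $\Gamma=(G,\mathcal{A},\psi)$ is the group on $\mathcal{A}\times G$ with multiplication $(a,g)(b,h)=(ab\,\psi(g,h),gh)$. A matrix is strictly cocyclic over $G$ if it equals $[\psi(x,y)\phi(xy)]_{x,y\in G}$ for some normalised 2-cocycle $\psi\colon G\times G\to\mathcal{A}$ and some map $\phi\colon G\to\mathcal{A}$. Two matrices $M,M'$ are $\mathcal{A}$-equivalent if $M'=PMQ^\ast$ for monomial matrices $P,Q$ with nonzero entries in $\mathcal{A}$. $M$ is cocyclic over $G$ if it is $\mathcal{A}$-equivalent to a strictly cocyclic matrix. $\delta^a_b$ is the Kronecker delta. *)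

(* Defs.v *)
From HB Require Import structures.
From mathcomp Require Import all_boot all_order all_algebra all_fingroup all_field.
Set Implicit Arguments. Unset Strict Implicit. Unset Printing Implicit Defensive.
Import Order.TTheory GRing.Theory Num.Theory.
Local Open Scope ring_scope.

(* The finite group G is a finGroupType gT; the coefficient group A is a
   finite subgroup of the multiplicative group of the complex numbers,
   modelled inside algC (algebraic complex numbers; every finite subgroup of
   C^x consists of roots of unity, hence lies in algC). *)
Definition fin_subgroup_Cx (A : {pred algC}) : Prop :=
  [/\ 1 \in A, 0 \notin A,
      {in A &, forall x y, x * y \in A},
      {in A, forall x, x^-1 \in A}
    & exists s : seq algC, {subset A <= s}].

Definition mxG (gT : finType) (f : gT -> gT -> algC) : 'M[algC]_#|gT| :=
  \matrix_(i, j) f (enum_val i) (enum_val j).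

Definition normalised_cocycle (gT : finGroupType) (A : {pred algC})
    (psi : gT -> gT -> algC) : Prop :=
  [/\ forall g h, psi g h \in A,
      forall g, psi g 1%g = 1 /\ psi 1%g g = 1
    & forall g h k, psi g h * psi (g * h)%g k = psi g (h * k)%g * psi h k].

Definition strictly_cocyclic (gT : finGroupType) (A : {pred algC})
    (M : 'M[algC]_#|gT|) : Prop :=
  exists psi : gT -> gT -> algC, exists phi : gT -> algC,
    [/\ normalised_cocycle A psi, forall g, phi g \in A
      & M = mxG (fun x y => psi x y * phi (x * y)%g)].

Definition monomialA (n : nat) (A : {pred algC}) (P : 'M[algC]_n) : Prop :=
  [/\ forall i, #|[pred j | P i j != 0]| = 1%N,
      forall j, #|[pred i | P i j != 0]| = 1%N
    & forall i j, P i j != 0 -> P i j \in A].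

Definition conjtr (n : nat) (Q : 'M[algC]_n) : 'M[algC]_n :=
  \matrix_(i, j) (Q j i)^*.

Definition A_equivalent (n : nat) (A : {pred algC}) (M M' : 'M[algC]_n) : Prop :=
  exists P Q : 'M[algC]_n,
    [/\ monomialA A P, monomialA A Q & M' = P *m M *m conjtr Q].

Definition cocyclic (gT : finGroupType) (A : {pred algC})
    (M : 'M[algC]_#|gT|) : Prop :=
  exists M', strictly_cocyclic A M' /\ A_equivalent A M M'.

(* monomial representation R(a,g) = a [psi(x,g) delta^{xg}_y]_{x,y} of the
   extension Gamma = (G, A, psi), whose elements are pairs (a, g), a \in A *)
Definition monoRep (gT : finGroupType) (psi : gT -> gT -> algC)
    (a : algC) (g : gT) : 'M[algC]_#|gT| :=
  a *: mxG (fun x y => psi x g * (((x * g)%g == y)%:R)).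

Definition in_centraliser (gT : finGroupType) (A : {pred algC})
    (psi : gT -> gT -> algC) (X : 'M[algC]_#|gT|) : Prop :=
  forall a g, a \in A -> X *m monoRep psi a g = monoRep psi a g *m X.

(* Main.v *)
Require Import Defs.
From HB Require Import structures.
From mathcomp Require Import all_boot all_order all_algebra all_fingroup all_field.
From mathcomp Require Import ring.
Import GRing.Theory Num.Theory.
Local Open Scope ring_scope.
Set Implicit Arguments. Unset Strict Implicit. Unset Printing Implicit Defensive.

Lemma conjA (A : {pred algC}) : fin_subgroup_Cx A -> forall a, a \in A -> a^* = a^-1.
Proof.
move=> [A1 A0 AM AV [s sA]] a aA.
have powA k : a ^+ k \in A by elim: k => [|k IH]; rewrite ?expr0 // exprS AM.
have : ~~ uniq [seq a ^+ k | k <- iota 0 (size s).+1].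
  apply/negP => U.
  have H : {subset [seq a ^+ k | k <- iota 0 (size s).+1] <= s}.
    by move=> x /mapP [k _ ->]; apply: sA.
  by have := uniq_leq_size U H; rewrite size_map size_iota ltnn.
case/(uniqPn 0) => i [j] [ij]; rewrite size_map size_iota => js.
rewrite !(nth_map 0%N) ?size_iota ?(ltn_trans ij) // !nth_iota ?(ltn_trans ij) // !add0n => Eij.
have a0 : a != 0 by apply: contraNneq A0 => <-.
have E1 : a ^+ (j - i) = 1 by rewrite expfB // -Eij divff // expf_neq0.
have N1 : `|a| = 1.
  apply/eqP; rewrite -(pexpr_eq1 (n := (j - i)%N)) ?subn_gt0 //.
  by rewrite -normrX E1 normr1.
by rewrite invC_norm N1 expr1n invr1 mul1r.
Qed.

Definition AEx n (A : {pred algC}) (M M' : 'M[algC]_n) :=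
  exists (c e : 'I_n -> algC) (s t : 'I_n -> 'I_n),
    [/\ forall i, c i \in A, forall j, e j \in A, injective s, injective t
      & forall i j, M' i j = c i * e j * M (s i) (t j)].

Lemma sum_delta n (F : 'I_n -> algC) j0 : \sum_k F k * (j0 == k)%:R = F j0.
Proof.
rewrite (bigD1 j0) //= eqxx mulr1 big1 ?addr0 // => k nk.
by rewrite (negbTE (_ : j0 != k)) ?mulr0 // eq_sym.
Qed.

Lemma mono_ex n (A : {pred algC}) (P : 'M[algC]_n) : monomialA A P ->
  exists s : 'I_n -> 'I_n,
    [/\ injective s, forall i, P i (s i) \in A & forall i j, j != s i -> P i j = 0].
Proof.
case=> Hr Hc HA.
have rowU i j1 j2 : P i j1 != 0 -> P i j2 != 0 -> j1 = j2.
  move: (Hr i) => /eqP/card1P [x Hx] h1 h2.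
  move: (Hx j1) (Hx j2); rewrite !inE h1 h2 => /esym/eqP -> /esym/eqP -> //.
have colU j i1 i2 : P i1 j != 0 -> P i2 j != 0 -> i1 = i2.
  move: (Hc j) => /eqP/card1P [x Hx] h1 h2.
  move: (Hx i1) (Hx i2); rewrite !inE h1 h2 => /esym/eqP -> /esym/eqP -> //.
have ex i : exists j, P i j != 0.
  move: (Hr i) => /eqP/card1P [x Hx]; exists x.
  by move: (Hx x); rewrite !inE eqxx.
exists (fun i => xchoose (ex i)); split.
- move=> i1 i2 E; apply: (colU (xchoose (ex i1)) i1 i2); first exact: (xchooseP (ex i1)).
  by rewrite E; exact: (xchooseP (ex i2)).
- by move=> i; apply: HA; exact: (xchooseP (ex i)).
- move=> i j nj; apply/eqP; apply: contraNT nj => nz.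
  by apply/eqP; apply: rowU nz (xchooseP (ex i)).
Qed.

Lemma conjA_in (A : {pred algC}) a : fin_subgroup_Cx A -> a \in A -> a^* \in A.
Proof. move=> HA aA; rewrite (conjA HA aA); by case: HA => _ _ _ AV _; apply: AV. Qed.

Lemma AE_AEx n (A : {pred algC}) (M M' : 'M[algC]_n) : fin_subgroup_Cx A ->
  A_equivalent A M M' -> AEx A M M'.
Proof.
move=> HA [P [Q [/mono_ex [s [sI sA s0]] /mono_ex [t [tI tA t0]] ->]]].
exists (fun i => P i (s i)), (fun j => (Q j (t j))^*), s, t; split => //.
- by move=> j; apply: conjA_in.
move=> i j; rewrite mxE (bigD1 (t j)) //= big1 ?addr0 => [|k kt].
  rewrite !mxE (bigD1 (s i)) //= big1 ?addr0 => [|l ls]; first by rewrite mulrAC.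
  by rewrite s0 ?mul0r.
by rewrite [conjtr Q _ _]mxE t0 ?conjC0 ?mulr0 // eq_sym.
Qed.

Lemma mono_of n (A : {pred algC}) (c : 'I_n -> algC) (s : 'I_n -> 'I_n) :
  0 \notin A -> (forall i, c i \in A) -> injective s ->
  monomialA A (\matrix_(i, j) (c i * (s i == j)%:R)).
Proof.
move=> A0 cA sI.
have c0 i : c i != 0 by apply: contraNneq A0 => <-.
split.
- move=> i; apply/eqP/card1P; exists (s i) => j.
  by rewrite !inE mxE mulf_eq0 negb_or c0 /= pnatr_eq0 eqb0 negbK eq_sym.
- move=> j; apply/eqP/card1P; exists ((perm sI)^-1%g j) => i.
  rewrite !inE mxE mulf_eq0 negb_or c0 /= pnatr_eq0 eqb0 negbK.
  have K : s ((perm sI)^-1%g j) = j by rewrite -[s _]permE permKV.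
  apply/eqP/eqP => [<-|->].
  by rewrite -[s i]permE permK.
  exact: K.
- move=> i j; rewrite mxE.
  have [E|_] := eqVneq (s i) j.
    by rewrite (_ : true%:R = 1) // mulr1 => _.
  by rewrite (_ : false%:R = 0) // mulr0 eqxx.
Qed.

Lemma AEx_AE n (A : {pred algC}) (M M' : 'M[algC]_n) : fin_subgroup_Cx A ->
  AEx A M M' -> A_equivalent A M M'.
Proof.
move=> HA [c [e [s [t [cA eA sI tI E]]]]].
have A0 : 0 \notin A by case: HA.
exists (\matrix_(i, j) (c i * (s i == j)%:R)), (\matrix_(i, j) ((e i)^* * (t i == j)%:R)).
split; [exact: mono_of | apply: mono_of => // j; exact: conjA_in | ].
apply/matrixP => i j; rewrite E !mxE.
under eq_bigr => k _ do rewrite !mxE rmorphM /= conjCK rmorph_nat mulrA.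
rewrite sum_delta.
under eq_bigr => k _ do rewrite mxE mulrAC.
by rewrite sum_delta mulrAC.
Qed.

Lemma AEx_trans n (A : {pred algC}) (M1 M2 M3 : 'M[algC]_n) : fin_subgroup_Cx A ->
  AEx A M1 M2 -> AEx A M2 M3 -> AEx A M1 M3.
Proof.
move=> [_ _ AM _ _] [c [e [s [t [cA eA sI tI E]]]]] [c' [e' [s' [t' [cA' eA' sI' tI' E']]]]].
exists (fun i => c' i * c (s' i)), (fun j => e' j * e (t' j)), (s \o s'), (t \o t'); split.
- by move=> i; apply: AM.
- by move=> i; apply: AM.
- exact: inj_comp.
- exact: inj_comp.
move=> i j; rewrite E' E /=.
by rewrite !mulrA; congr (_ * _); rewrite -!mulrA; congr (_ * _); rewrite mulrCA; congr (_ * _); rewrite mulrC.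
Qed.

Lemma AEx_in n (A : {pred algC}) (M M' : 'M[algC]_n) : fin_subgroup_Cx A ->
  (forall i j, M i j \in A) -> AEx A M M' -> forall i j, M' i j \in A.
Proof.
move=> [_ _ AM _ _] MA [c [e [s [t [cA eA sI tI E]]]]] i j.
by rewrite E; apply: (AM); [apply: (AM)|].
Qed.

Lemma natrT : (true%:R : algC) = 1. Proof. by []. Qed.

Lemma Rr (gT : finGroupType) (psi : gT -> gT -> algC) a g (X : 'M[algC]_#|gT|) i j :
  (X *m monoRep psi a g) i j =
  a * (X i (enum_rank (enum_val j * g^-1)%g) * psi (enum_val j * g^-1)%g g).
Proof.
rewrite mxE (bigD1 (enum_rank (enum_val j * g^-1)%g)) //= big1 ?addr0 => [|k nk].
  by rewrite /monoRep !mxE enum_rankK mulgKV eqxx natrT; ring.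
rewrite /monoRep !mxE (_ : (enum_val k * g == enum_val j)%g = false) ?mulr0 //.
apply/negbTE; apply: contra nk => /eqP E.
by apply/eqP; rewrite -E mulgK enum_valK.
Qed.

Lemma Rl (gT : finGroupType) (psi : gT -> gT -> algC) a g (X : 'M[algC]_#|gT|) i j :
  (monoRep psi a g *m X) i j =
  a * (psi (enum_val i) g * X (enum_rank (enum_val i * g)%g) j).
Proof.
rewrite mxE (bigD1 (enum_rank (enum_val i * g)%g)) //= big1 ?addr0 => [|k nk].
  by rewrite /monoRep !mxE enum_rankK eqxx natrT; ring.
rewrite /monoRep !mxE (_ : (enum_val i * g == enum_val k)%g = false) ?mulr0 ?mul0r //.
apply/negbTE; apply: contra nk => /eqP E.
by apply/eqP; rewrite E enum_valK.
Qed.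

Unset Implicit Arguments.

Theorem theorem4p4 (gT : finGroupType) (A : {pred algC})
    (M : 'M[algC]_#|gT|) :
  fin_subgroup_Cx A ->
  (forall i j, M i j \in A) ->
  (cocyclic A M <->
   exists psi : gT -> gT -> algC,
     normalised_cocycle A psi /\
     exists M' : 'M[algC]_#|gT|, A_equivalent A M M' /\ in_centraliser A psi M').
Proof.
move=> HA MA.
have [A1 A0 AM AV _] := HA.
have nz a : a \in A -> a != 0 by move=> aA; apply: contraNneq A0 => <-.
split.
- case=> S [[psi [phi [Hpsi phiA ->]]] HAE].
  have [psiA psi1 coc] := Hpsi.
  exists psi; split => //.
  exists (mxG (fun x y => psi x (y^-1)%g * phi (x * y^-1)%g * (psi y (y^-1)%g)^-1)).
  split.
    apply: (AEx_AE HA); apply: (AEx_trans HA (AE_AEx HA HAE)).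
    exists (fun _ => 1), (fun j => (psi (enum_val j) ((enum_val j)^-1)%g)^-1), id,
      (fun j => enum_rank ((enum_val j)^-1)%g); split => //.
    + by move=> j; apply: AV.
    + by move=> j1 j2 /(congr1 enum_val); rewrite !enum_rankK => /invg_inj /enum_val_inj.
    + by move=> i j; rewrite !mxE enum_rankK; ring.
  move=> a g aA; apply/matrixP => i j; rewrite Rr Rl; congr (a * _); rewrite !mxE !enum_rankK.
  set x := enum_val i; set y := enum_val j.
  rewrite invMg invgK mulgA.
  have C1 := coc x g (y^-1)%g.
  have C2 := coc (y * g^-1)%g g (y^-1)%g.
  rewrite mulgKV in C2.
  have p4E : psi (x * g)%g (y^-1)%g = psi x (g * y^-1)%g * psi g (y^-1)%g / psi x g.
    by rewrite -C1 mulrC mulKf // nz.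
  have pgE : psi g (y^-1)%g = psi (y * g^-1)%g g * psi y (y^-1)%g / psi (y * g^-1)%g (g * y^-1)%g.
    by rewrite C2 mulrC mulKf // nz.
  rewrite p4E pgE; field.
  by rewrite !nz.
- case=> psi [Hpsi [M' [HAE Hc]]].
  have [psiA psi1 coc] := Hpsi.
  have MA' := AEx_in HA MA (AE_AEx HA HAE).
  have key i y : M' i (enum_rank y) =
      M' (enum_rank 1%g) (enum_rank (y * (enum_val i)^-1)%g) * psi (y * (enum_val i)^-1)%g (enum_val i).
    have := congr1 (fun X : 'M_#|gT| => X (enum_rank 1%g) (enum_rank y)) (Hc 1 (enum_val i) A1).
    by rewrite /= Rr Rl !enum_rankK mul1g enum_valK (proj2 (psi1 _)) !mul1r => ->.
  pose phi h := M' (enum_rank 1%g) (enum_rank (h^-1)%g) * psi (h^-1)%g h.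
  exists (mxG (fun x y => psi x y * phi (x * y)%g)); split.
    exists psi, phi; split => // h; exact: AM.
  apply: (AEx_AE HA); apply: (AEx_trans HA (AE_AEx HA HAE)).
  exists (fun _ => 1), (fun j => psi ((enum_val j)^-1)%g (enum_val j)), id,
    (fun j => enum_rank ((enum_val j)^-1)%g); split => //.
  + by move=> j1 j2 /(congr1 enum_val); rewrite !enum_rankK => /invg_inj /enum_val_inj.
  move=> i j; rewrite !mxE key /phi.
  set g := enum_val i; set w := enum_val j.
  rewrite invMg.
  have C := coc (w^-1 * g^-1)%g g w.
  rewrite mulgKV in C.
  set m := M' _ _.
  transitivity (m * (psi (w^-1 * g^-1)%g (g * w)%g * psi g w)); first by ring.
  by rewrite -C; ring.
Qed.
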